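(* Let $\mu<\lambda$ be infinite cardinals with $\mu^{<\mu}=\mu$ and $\lambda$ regular. Then the forcing notion $\mathbb P(\lambda,\mu)$ satisfies the $\mu^+$-chain condition.
   Context: Let $3$ denote the three-element set of symbols $\{\ge,\perp,u\}$. For a set $w$ of ordinals, $[w]^2=\{(i,j): i<j,\ i,j\in w\}$. A valuation function is a map $p:[w]^2\to 3$ such that: (1) if $i<j<k$ in $w$, $p(i,j)={\ge}$ and $p(j,k)={\ge}$, then $p(i,k)={\ge}$; (2) if $i<j<k$ in $w$ and $\{p(i,j),p(i,k)\}=\{\perp,\ge\}$ then $p(j,k)={\perp}$; and if $i<j<k$, $p(i,j)={\perp}$, $p(j,k)={\ge}$, then $p(i,k)={\perp}$. $\mathbb P(\lambda,\mu)$ is the set of valuation functions whose domain is a subset of $\lambda$ of cardinality less than $\mu$, ordered by reverse inclusion. *)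

(* Defs.v *)
(* Ordinals/cardinals are modelled as types carrying a strict
   well-order; cardinalities are compared via injections. *)
From Stdlib Require Import Classical.

Set Implicit Arguments.

Definition inj (A B : Type) : Prop :=
  exists f : A -> B, forall x y, f x = f y -> x = y.

Definition strict_wellorder {T : Type} (lt : T -> T -> Prop) : Prop :=
  (forall x, ~ lt x x) /\
  (forall x y z, lt x y -> lt y z -> lt x z) /\
  (forall x y, lt x y \/ x = y \/ lt y x) /\
  well_founded lt.

Definition is_cardinal {T : Type} (lt : T -> T -> Prop) : Prop :=
  forall x, ~ inj T {y | lt y x}.

Definition infinite (T : Type) : Prop := inj nat T.

Definition regular {T : Type} (lt : T -> T -> Prop) : Prop :=
  forall X : T -> Prop, (forall y, exists x, X x /\ ~ lt x y) -> inj T {x | X x}.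

(* mu^{<mu} <= mu : the set of all functions alpha -> mu, alpha < mu,
   has cardinality at most mu (it is always >= mu, so this is mu^{<mu} = mu) *)
Definition pow_lt_eq {T : Type} (lt : T -> T -> Prop) : Prop :=
  inj {a : T & ({y | lt y a} -> T)} T.

Inductive three : Type := Ge | Perp | U.

Definition is_valuation {L : Type} (lt : L -> L -> Prop)
  (w : L -> Prop) (p : L -> L -> three) : Prop :=
  forall i j k, w i -> w j -> w k -> lt i j -> lt j k ->
    (p i j = Ge -> p j k = Ge -> p i k = Ge) /\
    ((p i j = Perp /\ p i k = Ge) \/ (p i j = Ge /\ p i k = Perp) -> p j k = Perp) /\
    (p i j = Perp -> p j k = Ge -> p i k = Perp).

(* a condition: a domain w (subset of lambda) and values on [w]^2 *)
Definition cond (L : Type) : Type := ((L -> Prop) * (L -> L -> three))%type.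

Definition in_P {L : Type} (lt : L -> L -> Prop) (M : Type) (c : cond L) : Prop :=
  is_valuation lt (fst c) (snd c) /\
  inj {x | fst c x} M /\ ~ inj M {x | fst c x}.

(* q <= p (q extends p; reverse inclusion of functions on [dom]^2) *)
Definition ext {L : Type} (lt : L -> L -> Prop) (q p : cond L) : Prop :=
  (forall i, fst p i -> fst q i) /\
  (forall i j, fst p i -> fst p j -> lt i j -> snd q i j = snd p i j).

Definition compatible {L : Type} (lt : L -> L -> Prop) (M : Type) (p q : cond L) : Prop :=
  exists r, in_P lt M r /\ ext lt r p /\ ext lt r q.

Definition mu_plus_cc {L : Type} (lt : L -> L -> Prop) (M : Type) : Prop :=
  forall (I : Type) (f : I -> cond L),
    (forall i, in_P lt M (f i)) ->
    (forall i j, i <> j -> ~ compatible lt M (f i) (f j)) ->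
    inj I M.

(* Main.v *)
Require Import Defs.
From Stdlib Require Import Classical ClassicalEpsilon FunctionalExtensionality PropExtensionality Eqdep.

Lemma inj_refl (A : Type) : inj A A.
Proof. exists (fun x => x); auto. Qed.

Lemma inj_trans (A B C : Type) : inj A B -> inj B C -> inj A C.
Proof. intros [f Hf] [g Hg]; exists (fun x => g (f x)); auto. Qed.

Lemma inj_sub (T C : Type) (P Q : T -> Prop) :
  (forall x, P x -> Q x) -> inj {x | Q x} C -> inj {x | P x} C.
Proof.
  intros H [f Hf]. exists (fun x => f (exist _ (proj1_sig x) (H _ (proj2_sig x)))).
  intros [x px] [y py] E. apply Hf in E. simpl. injection E; intros; subst.
  f_equal; apply proof_irrelevance.
Qed.

Lemma inj_fun (X A B : Type) : inj A B -> inj (X -> A) (X -> B).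
Proof.
  intros [f Hf]. exists (fun g x => f (g x)). intros g h E.
  extensionality x. apply Hf. exact (equal_f E x).
Qed.

Definition choose {A : Type} (P : A -> Prop) (H : exists x, P x) : A :=
  proj1_sig (constructive_indefinite_description P H).
Lemma choose_spec {A : Type} (P : A -> Prop) (H : exists x, P x) : P (choose P H).
Proof. unfold choose; destruct constructive_indefinite_description; auto. Qed.

Definition dec (P : Prop) : {P} + {~P} := excluded_middle_informative P.

Lemma inj_empty_or (A B : Type) : inj A B -> (exists b : B, True) \/ (forall a : A, False).
Proof.
  intros [f _]. destruct (classic (exists a : A, True)) as [[a _]|H].
  left; exists (f a); auto. right; intros a; apply H; exists a; auto.
Qed.

Lemma inj_inv (A B : Type) (f : A -> B) (a0 : A) :
  (forall x y, f x = f y -> x = y) ->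
  exists g : B -> A, forall a, g (f a) = a.
Proof.
  intros Hf.
  exists (fun b => match dec (exists a, f a = b) with
                   | left H => choose _ H | right _ => a0 end).
  intros a. destruct (dec _) as [H|H].
  - apply Hf. exact (choose_spec (fun x => f x = f a) H).
  - exfalso; apply H; exists a; auto.
Qed.

Definition seg {T : Type} (lt : T -> T -> Prop) (a : T) : Type := {y | lt y a}.
Definition tiny (M X : Type) : Prop := inj (X -> M) M.
Definition small (M X : Type) : Prop := inj X M /\ ~ inj M X.

Lemma cantor (M X : Type) (m0 m1 : M) : m0 <> m1 -> tiny M X -> ~ inj M X.
Proof.
  intros H01 [i Hi] [g Hg].
  destruct (inj_inv (X -> M) M i (fun _ => m0) Hi) as [e He].
  destruct (inj_inv M X g m0 Hg) as [h Hh].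
  set (other := fun v : M => if dec (v = m0) then m1 else m0).
  assert (Ho : forall v, other v <> v).
  { intros v; unfold other; destruct (dec _); congruence. }
  set (d := fun x => other (e (h x) x)).
  apply (Ho (d (g (i d)))).
  change (other (d (g (i d))) = other (e (h (g (i d))) (g (i d)))).
  rewrite Hh, He. reflexivity.
Qed.

Lemma inj_tiny (M X Y : Type) (m0 : M) : inj X Y -> tiny M Y -> tiny M X.
Proof.
  intros [f Hf] [i Hi].
  destruct (classic (exists x : X, True)) as [[x0 _]|HX].
  - destruct (inj_inv X Y f x0 Hf) as [h Hh].
    exists (fun phi => i (fun y => phi (h y))).
    intros phi psi E. apply Hi in E. extensionality x.
    rewrite <- (Hh x). exact (equal_f E (f x)).
  - exists (fun _ => m0). intros phi psi _. extensionality x. exfalso; apply HX; exists x; auto.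
Qed.

Lemma tiny_small (M X : Type) (m0 m1 : M) : m0 <> m1 -> tiny M X -> small M X.
Proof.
  intros H01 HT. split.
  - eapply inj_trans; [|exact HT].
    exists (fun x y => if dec (y = x) then m1 else m0).
    intros x y E. pose proof (equal_f E x) as E'. simpl in E'.
    destruct (dec (x = x)); destruct (dec (x = y)); congruence.
  - eapply cantor; eauto.
Qed.

Lemma tiny_seg (M : Type) (ltM : M -> M -> Prop) (a : M) :
  pow_lt_eq ltM -> tiny M (seg ltM a).
Proof.
  intros [f Hf]. exists (fun g => f (existT _ a g)).
  intros g h E. apply Hf in E. apply inj_pair2 in E. exact E.
Qed.

Lemma compare_M (M X : Type) (ltM : M -> M -> Prop) :
  strict_wellorder ltM -> (exists m : M, True) ->
  inj M X \/ exists a, inj X (seg ltM a).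
Proof.
  intros [Hirr [Htr [Htri wf]]] [m00 _].
  destruct (classic (exists x : X, True)) as [[x0 _]|HX].
  2:{ right. exists m00. exists (fun x : X => match HX (ex_intro _ x I) with end).
      intros x; exfalso; apply HX; exists x; auto. }
  set (F := fun (m : M) (rec : forall m', ltM m' m -> X) =>
    epsilon (inhabits x0) (fun x => forall m' (h : ltM m' m), rec m' h <> x)).
  set (G := Fix wf (fun _ => X) F).
  assert (HG : forall m, G m = epsilon (inhabits x0) (fun x => forall m', ltM m' m -> G m' <> x)).
  { intros m. unfold G. rewrite Fix_eq.
    - unfold F. f_equal.
    - intros x f g Hfg. unfold F. f_equal. extensionality y.
      apply propositional_extensionality; split; intros H m' h.
      + rewrite <- Hfg; auto.
      + rewrite Hfg; auto. }
  destruct (classic (forall m, exists x, forall m', ltM m' m -> G m' <> x)) as [Hall|Hn].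
  - left. exists G.
    assert (Hs : forall m m', ltM m' m -> G m' <> G m).
    { intros m m' h. rewrite (HG m).
      apply (epsilon_spec (inhabits x0) (fun x => forall m', ltM m' m -> G m' <> x) (Hall m)). auto. }
    intros x y E. destruct (Htri x y) as [h|[h|h]]; auto.
    + exfalso; apply (Hs y x h); auto.
    + exfalso; apply (Hs x y h); auto.
  - right. apply not_all_ex_not in Hn as [m Hm].
    exists m.
    assert (Hc : forall x, exists m' : seg ltM m, G (proj1_sig m') = x).
    { intros x. apply NNPP; intros Hx. apply Hm. exists x. intros m' h E.
      apply Hx. exists (exist _ m' h). auto. }
    exists (fun x => choose _ (Hc x)).
    intros x y E. rewrite <- (choose_spec _ (Hc x)), <- (choose_spec _ (Hc y)). rewrite E. auto.
Qed.

Definition Mhyp (M : Type) (ltM : M -> M -> Prop) : Prop :=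
  strict_wellorder ltM /\ is_cardinal ltM /\ infinite M /\ pow_lt_eq ltM.
Arguments Mhyp {M} ltM.
Set Implicit Arguments.

Lemma M_three (M : Type) (ltM : M -> M -> Prop) : Mhyp ltM ->
  exists m0 m1 m2 : M, m0 <> m1 /\ m0 <> m2 /\ m1 <> m2.
Proof.
  intros [_ [_ [[e He] _]]]. exists (e 0), (e 1), (e 2).
  repeat split; intro E; apply He in E; discriminate.
Qed.

Lemma M_two (M : Type) (ltM : M -> M -> Prop) : Mhyp ltM ->
  exists m0 m1 : M, m0 <> m1.
Proof. intros H. destruct (M_three H) as (a&b&c&?&?&?). eauto. Qed.

Lemma M_pair_below (M : Type) (ltM : M -> M -> Prop) : Mhyp ltM ->
  exists a y1 y2, y1 <> y2 /\ ltM y1 a /\ ltM y2 a.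
Proof.
  intros H. destruct (M_three H) as (x&y&z&Hxy&Hxz&Hyz).
  destruct H as [[Hirr [Htr [Htri _]]] _].
  assert (exists b c, b <> z /\ c <> z /\ b <> c /\ ltM c b) as (b&c&Hbz&Hcz&Hbc&Hcb).
  { destruct (Htri x y) as [h|[h|h]]; [exists y, x | congruence | exists x, y]; auto. }
  destruct (Htri b z) as [h|[h|h]].
  - exists z, b, c. repeat split; eauto.
  - congruence.
  - exists b, c, z. auto.
Qed.

Lemma seg_small (M : Type) (ltM : M -> M -> Prop) (a : M) : Mhyp ltM ->
  small M (seg ltM a).
Proof.
  intros [_ [Hc _]]. split.
  - exists (@proj1_sig _ _). intros [x hx] [y hy] E; simpl in E; subst. f_equal; apply proof_irrelevance.
  - apply Hc.
Qed.

Lemma small_tiny (M X : Type) (ltM : M -> M -> Prop) : Mhyp ltM -> small M X -> tiny M X.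
Proof.
  intros H [HXM HMX]. destruct (M_two H) as (m0&m1&_).
  destruct (compare_M M X ltM (proj1 H) (ex_intro _ m0 I)) as [h|[a Ha]]; [contradiction |].
  eapply inj_tiny; [exact m0 | exact Ha |]. apply tiny_seg. apply H.
Qed.

Lemma tiny_iff (M X : Type) (ltM : M -> M -> Prop) : Mhyp ltM -> (tiny M X <-> small M X).
Proof.
  intros H. split.
  - destruct (M_two H) as (m0&m1&?). apply tiny_small with m0 m1; auto.
  - apply small_tiny with ltM; auto.
Qed.

Lemma pairing (M : Type) (ltM : M -> M -> Prop) : Mhyp ltM -> inj (M * M) M.
Proof.
  intros H. destruct (M_pair_below H) as (a&y1&y2&H12&h1&h2).
  eapply inj_trans; [| apply (tiny_seg M ltM a (proj2 (proj2 (proj2 H))))].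
  exists (fun p (y : seg ltM a) => if dec (proj1_sig y = y1) then fst p else snd p).
  intros [m n] [m' n'] E.
  pose proof (equal_f E (exist _ y1 h1)) as E1.
  pose proof (equal_f E (exist _ y2 h2)) as E2. simpl in *.
  destruct (dec (y1 = y1)); [|congruence]. destruct (dec (y2 = y1)); [congruence|].
  subst; auto.
Qed.

Lemma inj_prod (A B C D : Type) : inj A C -> inj B D -> inj (A * B) (C * D).
Proof.
  intros [f Hf] [g Hg]. exists (fun p => (f (fst p), g (snd p))).
  intros [a b] [a' b'] E; injection E; intros; simpl in *. f_equal; auto.
Qed.

Lemma tiny_sum (M X Y : Type) (ltM : M -> M -> Prop) : Mhyp ltM ->
  tiny M X -> tiny M Y -> tiny M (X + Y).
Proof.
  intros H HX HY. eapply inj_trans; [| apply (pairing H)].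
  eapply inj_trans; [| apply (inj_prod HX HY)].
  exists (fun phi => (fun x => phi (inl x), fun y => phi (inr y))).
  intros f g E. injection E; intros E2 E1. extensionality z. destruct z as [x|y].
  exact (equal_f E1 x). exact (equal_f E2 y).
Qed.

Lemma tiny_prod (M X Y : Type) (ltM : M -> M -> Prop) : Mhyp ltM ->
  tiny M X -> tiny M Y -> tiny M (X * Y).
Proof.
  intros H HX HY. eapply inj_trans; [| exact HX].
  eapply inj_trans; [| apply (@inj_fun X _ _ HY)].
  exists (fun phi x y => phi (x, y)).
  intros f g E. extensionality z. destruct z as [x y].
  exact (equal_f (equal_f E x) y).
Qed.

Lemma tiny_unit (M : Type) : tiny M unit.
Proof. exists (fun phi => phi tt). intros f g E. extensionality z; destruct z; auto. Qed.

Lemma tiny_inj (M X Y : Type) (ltM : M -> M -> Prop) : Mhyp ltM ->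
  inj X Y -> tiny M Y -> tiny M X.
Proof. intros H. destruct (M_two H) as (m0&_). apply inj_tiny; auto. Qed.

Lemma inj_sigma (M A : Type) (B : A -> Type) (ltM : M -> M -> Prop) : Mhyp ltM ->
  inj A M -> (forall a, inj (B a) M) -> inj {a & B a} M.
Proof.
  intros H [f Hf] HB. eapply inj_trans; [| apply (pairing H)].
  set (g := fun a => choose _ (HB a)).
  assert (Hg : forall a x y, g a x = g a y -> x = y).
  { intros a. exact (choose_spec _ (HB a)). }
  exists (fun s => (f (projT1 s), g (projT1 s) (projT2 s))).
  intros [a x] [a' y] E. injection E; intros E2 E1. simpl in *.
  apply Hf in E1. subst a'. apply Hg in E2. subst; auto.
Qed.

Lemma inj_union (M T L : Type) (ltM : M -> M -> Prop) (P : L -> Prop) (Q : T -> L -> Prop) :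
  Mhyp ltM -> (forall x, P x -> exists t, Q t x) -> inj T M ->
  (forall t, inj {x | Q t x} M) -> inj {x | P x} M.
Proof.
  intros H HPQ HT HQ. eapply inj_trans; [| apply (@inj_sigma M T (fun t => {x | Q t x}) ltM H HT HQ)].
  exists (fun x => existT (fun t => {x | Q t x}) (choose _ (HPQ _ (proj2_sig x)))
                   (exist _ (proj1_sig x) (choose_spec _ (HPQ _ (proj2_sig x))))).
  intros [x hx] [y hy] E. simpl in E.
  apply (f_equal (fun s : {t : T & {x : L | Q t x}} => proj1_sig (projT2 s))) in E. simpl in E. subst.
  f_equal; apply proof_irrelevance.
Qed.

Lemma regular_M (M : Type) (ltM : M -> M -> Prop) (Y : M -> Prop) : Mhyp ltM ->
  small M {m | Y m} -> exists b, forall m, Y m -> ltM m b.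
Proof.
  intros H HY. apply NNPP; intros Hn.
  assert (Hu : forall b, exists m, Y m /\ ~ ltM m b).
  { intros b. apply NNPP; intros Hb. apply Hn. exists b. intros m hm.
    apply NNPP; intros hm'. apply Hb; eauto. }
  destruct (small_tiny H HY) as [i Hi].
  destruct (M_two H) as (m0&m1&H01).
  pose proof H as [[Hirr [Htr [Htri wf]]] Hrest].
  assert (Hseg : forall z : {m | Y m}, ~ inj M {x | ~ ltM (proj1_sig z) x}).
  { intros z. apply cantor with m0 m1; auto.
    apply tiny_inj with (ltM := ltM) (Y := (seg ltM (proj1_sig z) + unit)%type).
    - exact H.
    - exists (fun x : {x | ~ ltM (proj1_sig z) x} => match dec (proj1_sig x = proj1_sig z) with
                       | left _ => inr tt
                       | right hne => inl (exist _ (proj1_sig x)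
                            (match Htri (proj1_sig x) (proj1_sig z) with
                             | or_introl h => h
                             | or_intror (or_introl e) => False_ind _ (hne e)
                             | or_intror (or_intror h) => False_ind _ (proj2_sig x h) end))
                       end).
      intros [x hx] [y hy] E. simpl in E.
      destruct (dec (x = proj1_sig z)); destruct (dec (y = proj1_sig z)); try discriminate.
      + subst. f_equal; apply proof_irrelevance.
      + injection E; intros; subst. f_equal; apply proof_irrelevance.
    - apply tiny_sum with ltM; [exact H | apply tiny_seg; apply Hrest | apply tiny_unit]. }
  assert (Hex : forall z : {m | Y m}, exists v, forall phi, ~ ltM (proj1_sig z) (i phi) -> phi z <> v).
  { intros z. apply NNPP; intros Hz. apply (Hseg z).
    assert (Hc : forall v, exists phi, ~ ltM (proj1_sig z) (i phi) /\ phi z = v).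
    { intros v. apply NNPP; intros Hv. apply Hz. exists v. intros phi h E. apply Hv; eauto. }
    exists (fun v => exist _ (i (choose _ (Hc v))) (proj1 (choose_spec _ (Hc v)))).
    intros v w E. injection E; intros E'. apply Hi in E'.
    rewrite <- (proj2 (choose_spec _ (Hc v))), <- (proj2 (choose_spec _ (Hc w))). rewrite E'. auto. }
  set (d := fun z => choose _ (Hex z)).
  destruct (Hu (i d)) as [m [hm hlt]].
  apply (choose_spec _ (Hex (exist _ m hm)) d hlt). reflexivity.
Qed.

Unset Implicit Arguments.

Section Amal.
Variable L : Type.
Variable lt : L -> L -> Prop.
Hypothesis Htr : forall x y z, lt x y -> lt y z -> lt x z.
Hypothesis Htri : forall x y, lt x y \/ x = y \/ lt y x.
Hypothesis Hirr : forall x, ~ lt x x.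
Variable V : L -> L -> three.
Variable D : L -> Prop.

Definition GeW x y := exists d, D d /\ lt x d /\ lt d y /\ V x d = Ge /\ V d y = Ge.
Definition PW x y :=
  (exists d, D d /\ lt x d /\ lt d y /\ V x d = Perp /\ V d y = Ge) \/
  (exists d, D d /\ lt d x /\ ((V d x = Perp /\ V d y = Ge) \/ (V d x = Ge /\ V d y = Perp))).
Definition cl x y := if dec (GeW x y) then Ge else if dec (PW x y) then Perp else U.

Definition mixed (A B : L -> Prop) x y := (A x /\ B y) \/ (B x /\ A y).
Definition rr (A B : L -> Prop) x y := if dec (mixed A B x y) then cl x y else V x y.

Lemma rr_swap A B x y : rr A B x y = rr B A x y.
Proof. unfold rr, mixed. destruct (dec _), (dec _); tauto. Qed.

Lemma rr_mixed A B x y : mixed A B x y -> rr A B x y = cl x y.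
Proof. unfold rr; destruct (dec _); tauto. Qed.
Lemma rr_nonmixed A B x y : ~ mixed A B x y -> rr A B x y = V x y.
Proof. unfold rr; destruct (dec _); tauto. Qed.

Lemma cl_G x y : cl x y = Ge <-> GeW x y.
Proof. unfold cl; destruct (dec _); [tauto|]. destruct (dec _); split; intros; try discriminate; tauto. Qed.
Lemma cl_P x y : cl x y = Perp -> PW x y.
Proof. unfold cl; destruct (dec _); [discriminate|]. destruct (dec _); [auto|discriminate]. Qed.
Lemma cl_P' x y : ~ GeW x y -> PW x y -> cl x y = Perp.
Proof. unfold cl; destruct (dec _); [tauto|]. destruct (dec _); tauto. Qed.

Section Val.
Variable w : L -> Prop.
Hypothesis Hw : is_valuation lt w V.
Lemma vR1 a b c : w a -> w b -> w c -> lt a b -> lt b c -> V a b = Ge -> V b c = Ge -> V a c = Ge.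
Proof. intros ha hb hc hab hbc; destruct (Hw a b c ha hb hc hab hbc) as (h1&h2&h3); intros; eauto. Qed.
Lemma vR2a a b c : w a -> w b -> w c -> lt a b -> lt b c -> V a b = Perp -> V a c = Ge -> V b c = Perp.
Proof. intros ha hb hc hab hbc; destruct (Hw a b c ha hb hc hab hbc) as (h1&h2&h3); intros; eauto. Qed.
Lemma vR2b a b c : w a -> w b -> w c -> lt a b -> lt b c -> V a b = Ge -> V a c = Perp -> V b c = Perp.
Proof. intros ha hb hc hab hbc; destruct (Hw a b c ha hb hc hab hbc) as (h1&h2&h3); intros; eauto. Qed.
Lemma vR3 a b c : w a -> w b -> w c -> lt a b -> lt b c -> V a b = Perp -> V b c = Ge -> V a c = Perp.
Proof. intros ha hb hc hab hbc; destruct (Hw a b c ha hb hc hab hbc) as (h1&h2&h3); intros; eauto. Qed.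
End Val.

Variables A B : L -> Prop.
Hypothesis HAB : forall x, A x -> B x -> False.
Hypothesis HAD : forall x, A x -> D x -> False.
Hypothesis HBD : forall x, B x -> D x -> False.
Hypothesis HV1 : is_valuation lt (fun x => A x \/ D x) V.
Hypothesis HV2 : is_valuation lt (fun x => B x \/ D x) V.

Ltac mem := first [ left; assumption | right; assumption ].
Ltac ord := solve [ eauto ].
Ltac S1 R a b c := eapply (R (fun x => A x \/ D x) HV1 a b c); [mem|mem|mem|ord|ord|assumption|assumption].
Ltac S2 R a b c := eapply (R (fun x => B x \/ D x) HV2 a b c); [mem|mem|mem|ord|ord|assumption|assumption].

Lemma NC x y : A x -> B y -> lt x y -> GeW x y -> PW x y -> False.
Proof.
  intros hx hy hxy [d (hd&h1&h2&e1&e2)] [[d' (hd'&h1'&h2'&e1'&e2')]|[d' (hd'&h1'&[[e1' e2']|[e1' e2']])]].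
  - destruct (Htri d d') as [h|[h|h]].
    + assert (V d d' = Perp) by S1 vR2b x d d'.
      assert (V d y = Perp) by S2 vR3 d d' y. congruence.
    + subst; congruence.
    + assert (V d' d = Perp) by S1 vR2a x d' d.
      assert (V d' y = Perp) by S2 vR3 d' d y. congruence.
  - assert (V d' d = Perp) by S1 vR3 d' x d.
    assert (V d y = Perp) by S2 vR2a d' d y. congruence.
  - assert (V d' d = Ge) by S1 vR1 d' x d.
    assert (V d y = Perp) by S2 vR2b d' d y. congruence.
Qed.

Lemma NC2 x y : B x -> A y -> lt x y -> GeW x y -> PW x y -> False.
Proof.
  intros hx hy hxy [d (hd&h1&h2&e1&e2)] [[d' (hd'&h1'&h2'&e1'&e2')]|[d' (hd'&h1'&[[e1' e2']|[e1' e2']])]].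
  - destruct (Htri d d') as [h|[h|h]].
    + assert (V d d' = Perp) by S2 vR2b x d d'.
      assert (V d y = Perp) by S1 vR3 d d' y. congruence.
    + subst; congruence.
    + assert (V d' d = Perp) by S2 vR2a x d' d.
      assert (V d' y = Perp) by S1 vR3 d' d y. congruence.
  - assert (V d' d = Perp) by S2 vR3 d' x d.
    assert (V d y = Perp) by S1 vR2a d' d y. congruence.
  - assert (V d' d = Ge) by S2 vR1 d' x d.
    assert (V d y = Perp) by S1 vR2b d' d y. congruence.
Qed.

Lemma clPA x y : A x -> B y -> lt x y -> PW x y -> cl x y = Perp.
Proof. intros; apply cl_P'; auto. intro; eapply NC; eauto. Qed.
Lemma clPB x y : B x -> A y -> lt x y -> PW x y -> cl x y = Perp.
Proof. intros; apply cl_P'; auto. intro; eapply NC2; eauto. Qed.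

Definition rules (f : L -> L -> three) i j k :=
  (f i j = Ge -> f j k = Ge -> f i k = Ge) /\
  ((f i j = Perp /\ f i k = Ge) \/ (f i j = Ge /\ f i k = Perp) -> f j k = Perp) /\
  (f i j = Perp -> f j k = Ge -> f i k = Perp).

Ltac nm := unfold mixed; intros [[? ?]|[? ?]]; eauto.
Ltac mx := unfold mixed; first [left; split; assumption | right; split; assumption].
Ltac fin := repeat split; try assumption; try ord; try (left; split; assumption); try (right; split; assumption).
Ltac gw := match goal with H : cl _ _ = Ge |- _ => apply cl_G in H as [?d (?hd&?h1&?h2&?e3&?e4)] end.
Ltac pw := match goal with H : cl _ _ = Perp |- _ =>
   apply cl_P in H as [[?d (?hd&?h1&?h2&?e3&?e4)]|[?d (?hd&?h1&[[?e3 ?e4]|[?e3 ?e4]])]] end.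
Ltac clp := first [apply clPA; [assumption|assumption|ord|] | apply clPB; [assumption|assumption|ord|]]; unfold PW.

Lemma case_AAB i j k : A i -> A j -> B k -> lt i j -> lt j k -> rules (rr A B) i j k.
Proof.
  intros hi hj hk hij hjk. unfold rules.
  rewrite (rr_nonmixed A B i j) by nm. rewrite (rr_mixed A B i k) by mx. rewrite (rr_mixed A B j k) by mx.
  split; [|split].
  - intros e1 e2. gw. apply cl_G. exists d.
    assert (V i d = Ge) by S1 vR1 i j d. fin.
  - intros [[e1 e2]|[e1 e2]].
    + gw. clp. destruct (Htri d j) as [h|[h|h]].
      * assert (V d j = Perp) by S1 vR2b i d j. right; exists d; fin.
      * subst; exfalso; eauto.
      * assert (V j d = Perp) by S1 vR2a i j d. left; exists d; fin.
    + pw; clp.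
      * destruct (Htri d j) as [h|[h|h]].
        -- assert (V d j = Perp) by S1 vR2a i d j. right; exists d; fin.
        -- subst; exfalso; eauto.
        -- assert (V j d = Perp) by S1 vR2b i j d. left; exists d; fin.
      * assert (V d j = Perp) by S1 vR3 d i j. right; exists d; fin.
      * assert (V d j = Ge) by S1 vR1 d i j. right; exists d; fin.
  - intros e1 e2. gw. clp.
    assert (V i d = Perp) by S1 vR3 i j d. left; exists d; fin.
Qed.

Lemma case_ABA i j k : A i -> B j -> A k -> lt i j -> lt j k -> rules (rr A B) i j k.
Proof.
  intros hi hj hk hij hjk. unfold rules.
  rewrite (rr_nonmixed A B i k) by nm. rewrite (rr_mixed A B i j) by mx. rewrite (rr_mixed A B j k) by mx.
  split; [|split].
  - intros e1 e2. gw. gw.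
    assert (V d0 d = Ge) by S2 vR1 d0 j d.
    assert (V i d = Ge) by S1 vR1 i d0 d.
    S1 vR1 i d k.
  - intros [[e1 e2]|[e1 e2]].
    + pw; clp.
      * assert (V d k = Perp) by S1 vR2a i d k. right; exists d; fin.
      * assert (V d k = Perp) by S1 vR3 d i k. right; exists d; fin.
      * assert (V d k = Ge) by S1 vR1 d i k. right; exists d; fin.
    + gw; clp.
      assert (V d k = Perp) by S1 vR2b i d k. right; exists d; fin.
  - intros e1 e2. gw. pw.
    + assert (V d0 d = Ge) by S2 vR1 d0 j d.
      assert (V i d = Perp) by S1 vR3 i d0 d.
      S1 vR3 i d k.
    + assert (V d0 d = Ge) by S2 vR1 d0 j d.
      assert (V i d = Perp) by S1 vR2a d0 i d.
      S1 vR3 i d k.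
    + assert (V d0 d = Perp) by S2 vR3 d0 j d.
      assert (V i d = Perp) by S1 vR2b d0 i d.
      S1 vR3 i d k.
Qed.

Lemma case_BAA i j k : B i -> A j -> A k -> lt i j -> lt j k -> rules (rr A B) i j k.
Proof.
  intros hi hj hk hij hjk. unfold rules.
  rewrite (rr_nonmixed A B j k) by nm. rewrite (rr_mixed A B i j) by mx. rewrite (rr_mixed A B i k) by mx.
  split; [|split].
  - intros e1 e2. gw. apply cl_G. exists d.
    assert (V d k = Ge) by S1 vR1 d j k. fin.
  - intros [[e1 e2]|[e1 e2]].
    + gw. pw.
      * destruct (Htri d0 d) as [h|[h|h]].
        -- assert (V d0 d = Perp) by S2 vR2a i d0 d.
           assert (V d0 k = Perp) by S1 vR3 d0 d k.
           S1 vR2b d0 j k.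
        -- subst; congruence.
        -- assert (V d d0 = Perp) by S2 vR2b i d d0.
           assert (V d j = Perp) by S1 vR3 d d0 j.
           S1 vR2a d j k.
      * assert (V d0 d = Perp) by S2 vR3 d0 i d.
        assert (V d0 k = Perp) by S1 vR3 d0 d k.
        S1 vR2b d0 j k.
      * assert (V d0 d = Ge) by S2 vR1 d0 i d.
        assert (V d0 k = Ge) by S1 vR1 d0 d k.
        S1 vR2a d0 j k.
    + gw. pw.
      * destruct (Htri d d0) as [h|[h|h]].
        -- assert (V d d0 = Perp) by S2 vR2b i d d0.
           assert (V d k = Perp) by S1 vR3 d d0 k.
           S1 vR2b d j k.
        -- subst; congruence.
        -- assert (V d0 d = Perp) by S2 vR2a i d0 d.
           assert (V d0 j = Perp) by S1 vR3 d0 d j.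
           S1 vR2a d0 j k.
      * assert (V d0 d = Perp) by S2 vR3 d0 i d.
        assert (V d0 j = Perp) by S1 vR3 d0 d j.
        S1 vR2a d0 j k.
      * assert (V d0 d = Ge) by S2 vR1 d0 i d.
        assert (V d0 j = Ge) by S1 vR1 d0 d j.
        S1 vR2b d0 j k.
  - intros e1 e2. pw; clp.
    + assert (V d k = Ge) by S1 vR1 d j k. left; exists d; fin.
    + assert (V d k = Ge) by S1 vR1 d j k. right; exists d; fin.
    + assert (V d k = Perp) by S1 vR3 d j k. right; exists d; fin.
Qed.

Lemma case_ABD i j k : A i -> B j -> D k -> lt i j -> lt j k -> rules (rr A B) i j k.
Proof.
  intros hi hj hk hij hjk. unfold rules.
  rewrite (rr_nonmixed A B i k) by nm. rewrite (rr_nonmixed A B j k) by nm. rewrite (rr_mixed A B i j) by mx.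
  split; [|split].
  - intros e1 e2. gw.
    assert (V d k = Ge) by S2 vR1 d j k. S1 vR1 i d k.
  - intros [[e1 e2]|[e1 e2]].
    + pw.
      * assert (V d k = Perp) by S1 vR2a i d k. S2 vR2b d j k.
      * assert (V d k = Perp) by S1 vR3 d i k. S2 vR2b d j k.
      * assert (V d k = Ge) by S1 vR1 d i k. S2 vR2a d j k.
    + gw. assert (V d k = Perp) by S1 vR2b i d k. S2 vR2b d j k.
  - intros e1 e2. pw.
    + assert (V d k = Ge) by S2 vR1 d j k. S1 vR3 i d k.
    + assert (V d k = Ge) by S2 vR1 d j k. S1 vR2a d i k.
    + assert (V d k = Perp) by S2 vR3 d j k. S1 vR2b d i k.
Qed.

Lemma case_ADB i j k : A i -> D j -> B k -> lt i j -> lt j k -> rules (rr A B) i j k.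
Proof.
  intros hi hj hk hij hjk. unfold rules.
  rewrite (rr_nonmixed A B i j) by nm. rewrite (rr_nonmixed A B j k) by nm. rewrite (rr_mixed A B i k) by mx.
  split; [|split].
  - intros e1 e2. apply cl_G. exists j. fin.
  - intros [[e1 e2]|[e1 e2]].
    + gw. destruct (Htri d j) as [h|[h|h]].
      * assert (V d j = Perp) by S1 vR2b i d j. S2 vR2a d j k.
      * subst; congruence.
      * assert (V j d = Perp) by S1 vR2a i j d. S2 vR3 j d k.
    + pw.
      * destruct (Htri d j) as [h|[h|h]].
        -- assert (V d j = Perp) by S1 vR2a i d j. S2 vR2a d j k.
        -- subst; congruence.
        -- assert (V j d = Perp) by S1 vR2b i j d. S2 vR3 j d k.
      * assert (V d j = Perp) by S1 vR3 d i j. S2 vR2a d j k.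
      * assert (V d j = Ge) by S1 vR1 d i j. S2 vR2b d j k.
  - intros e1 e2. clp. left; exists j; fin.
Qed.

Lemma case_DAB i j k : D i -> A j -> B k -> lt i j -> lt j k -> rules (rr A B) i j k.
Proof.
  intros hi hj hk hij hjk. unfold rules.
  rewrite (rr_nonmixed A B i j) by nm. rewrite (rr_nonmixed A B i k) by nm. rewrite (rr_mixed A B j k) by mx.
  split; [|split].
  - intros e1 e2. gw.
    assert (V i d = Ge) by S1 vR1 i j d. S2 vR1 i d k.
  - intros [[e1 e2]|[e1 e2]]; clp; right; exists i; fin.
  - intros e1 e2. gw.
    assert (V i d = Perp) by S1 vR3 i j d. S2 vR3 i d k.
Qed.

End Amal.

Lemma rr_valid (L : Type) (lt : L -> L -> Prop)
  (Htr : forall x y z, lt x y -> lt y z -> lt x z)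
  (Htri : forall x y, lt x y \/ x = y \/ lt y x)
  (V : L -> L -> three) (D A B : L -> Prop)
  (HAB : forall x, A x -> B x -> False)
  (HAD : forall x, A x -> D x -> False)
  (HBD : forall x, B x -> D x -> False)
  (HV1 : is_valuation lt (fun x => A x \/ D x) V)
  (HV2 : is_valuation lt (fun x => B x \/ D x) V) :
  is_valuation lt (fun x => A x \/ D x \/ B x) (rr L lt V D A B).
Proof.
  intros i j k hi hj hk hij hjk.
  assert (Hs : rr L lt V D A B = rr L lt V D B A).
  { extensionality x; extensionality y; apply rr_swap. }
  assert (HBA : forall x, B x -> A x -> False) by eauto.
  change (rules L (rr L lt V D A B) i j k).
  destruct hi as [hi|[hi|hi]], hj as [hj|[hj|hj]], hk as [hk|[hk|hk]];
  first [ solve [eapply case_AAB; eauto] | solve [eapply case_ABA; eauto]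
        | solve [eapply case_BAA; eauto] | solve [eapply case_ABD; eauto]
        | solve [eapply case_ADB; eauto] | solve [eapply case_DAB; eauto]
        | solve [rewrite Hs; eapply case_AAB; eauto] | solve [rewrite Hs; eapply case_ABA; eauto]
        | solve [rewrite Hs; eapply case_BAA; eauto] | solve [rewrite Hs; eapply case_ABD; eauto]
        | solve [rewrite Hs; eapply case_ADB; eauto] | solve [rewrite Hs; eapply case_DAB; eauto]
        | solve [unfold rules; rewrite !rr_nonmixed by (unfold mixed; intros [[? ?]|[? ?]]; eauto);
                 first [solve [apply HV1; auto] | solve [apply HV2; auto]]] ].
Qed.

Set Implicit Arguments.



Lemma val_mono (L : Type) (lt : L -> L -> Prop) (w w' : L -> Prop) (f g : L -> L -> three) :
  (forall x y z, lt x y -> lt y z -> lt x z) ->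
  is_valuation lt w f -> (forall x, w' x -> w x) ->
  (forall x y, w' x -> w' y -> lt x y -> g x y = f x y) -> is_valuation lt w' g.
Proof.
  intros Htr Hv Hw Hg i j k hi hj hk hij hjk.
  rewrite (Hg i j), (Hg j k), (Hg i k) by eauto.
  exact (Hv i j k (Hw _ hi) (Hw _ hj) (Hw _ hk) hij hjk).
Qed.

Lemma inj_option (M X : Type) (ltM : M -> M -> Prop) : Mhyp ltM -> inj X M -> inj (option X) M.
Proof.
  intros H [g Hg]. destruct (M_two H) as (m0&m1&H01).
  eapply inj_trans; [| apply (pairing H)].
  exists (fun o => match o with None => (m0, m0) | Some x => (m1, g x) end).
  intros [x|] [y|] E; try (injection E; intros; congruence); auto.
  injection E; intros E'; apply Hg in E'; subst; auto.
Qed.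

Definition T5 := option (option three).

Lemma inj_T5 (M : Type) (ltM : M -> M -> Prop) : Mhyp ltM -> inj T5 M.
Proof.
  intros [_ [_ [HN _]]]. eapply inj_trans; [| exact HN].
  exists (fun t : T5 => match t with None => 0 | Some None => 1 | Some (Some Ge) => 2
                       | Some (Some Perp) => 3 | Some (Some U) => 4 end).
  intros [[[]|]|] [[[]|]|] E; simpl in E; try discriminate; auto.
Qed.

Section Main.
Variables (L : Type) (ltL : L -> L -> Prop) (M : Type) (ltM : M -> M -> Prop).
Hypothesis HM : Mhyp ltM.
Hypothesis wfM : well_founded ltM.
Hypothesis Htr : forall x y z, ltL x y -> ltL y z -> ltL x z.
Hypothesis Htri : forall x y, ltL x y \/ x = y \/ ltL y x.
Variable I : Type.
Variable f : I -> cond L.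
Hypothesis Hf : forall i, in_P ltL M (f i).
Hypothesis Hanti : forall i j, i <> j -> ~ compatible ltL M (f i) (f j).
Variable l0 : L.

Definition W i := fst (f i).
Definition vv i := snd (f i).
Definition Code (C : L -> Prop) := {a : M & seg ltM a -> {x | C x}}.
Definition cg C (k : Code C) (y : seg ltM (projT1 k)) : L := proj1_sig (projT2 k y).
Definition Tr C (i : I) (k : Code C) : seg ltM (projT1 k) -> seg ltM (projT1 k) -> T5 :=
  fun y z => if dec (W i (cg k y)) then
               (if dec (W i (cg k z)) then Some (Some (vv i (cg k y) (cg k z))) else Some None)
             else None.
Definition Real C (k : Code C) := {t | exists i, Tr i k = t}.
Definition wit C (k : Code C) (t : Real k) : I := choose (fun i => Tr i k = proj1_sig t) (proj2_sig t).
Lemma wit_spec (C : L -> Prop) (k : Code C) (t : Real k) : Tr (wit t) k = proj1_sig t.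
Proof. unfold wit. exact (choose_spec (fun i => Tr i k = proj1_sig t) (proj2_sig t)). Qed.

Definition K (C : L -> Prop) x := C x \/ exists (k : Code C) (t : Real k), W (wit t) x.

Lemma W_small i : small M {x | W i x}.
Proof. destruct (Hf i) as (_&h1&h2). split; auto. Qed.

Lemma inj_Code (C : L -> Prop) : inj {x | C x} M -> inj (Code C) M.
Proof.
  intros [g Hg]. eapply inj_trans; [| exact (proj2 (proj2 (proj2 HM)))].
  exists (fun k : Code C => existT (fun a => seg ltM a -> M) (projT1 k) (fun y => g (projT2 k y))).
  intros [a h] [b h'] E. simpl in E.
  assert (a = b) by exact (f_equal (@projT1 _ _) E). subst b.
  apply inj_pair2 in E. f_equal. extensionality y. apply Hg. exact (equal_f E y).
Qed.

Lemma inj_Real (C : L -> Prop) (k : Code C) : inj (Real k) M.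
Proof.
  eapply inj_trans with (B := seg ltM (projT1 k) -> seg ltM (projT1 k) -> T5).
  { exists (@proj1_sig _ _). intros [x hx] [y hy] E; simpl in E; subst; f_equal; apply proof_irrelevance. }
  eapply inj_trans; [apply inj_fun, inj_fun, (inj_T5 HM)|].
  eapply inj_trans; [apply inj_fun, (tiny_seg M ltM _ (proj2 (proj2 (proj2 HM))))|].
  apply (tiny_seg M ltM _ (proj2 (proj2 (proj2 HM)))).
Qed.

Lemma K_size (C : L -> Prop) : inj {x | C x} M -> inj {x | K C x} M.
Proof.
  intros HC.
  apply inj_union with (ltM := ltM)
    (T := option {k : Code C & Real k})
    (Q := fun o x => match o with None => C x | Some s => W (wit (projT2 s)) x end).
  - exact HM.
  - intros x [h|(k&t&h)]. exists None; exact h. exists (Some (existT _ k t)); exact h.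
  - apply inj_option with ltM; [exact HM|]. apply inj_sigma with ltM; [exact HM| apply inj_Code; auto |].
    intros; apply inj_Real.
  - intros [s|]; [apply (proj1 (W_small _)) | exact HC].
Qed.

Lemma K_incl (C : L -> Prop) x : C x -> K C x.
Proof. intros; left; auto. Qed.

Definition Fn (xi : M) (rec : forall eta, ltM eta xi -> L -> Prop) : L -> Prop :=
  K (fun x => x = l0 \/ exists eta (h : ltM eta xi), rec eta h x).
Definition Cseq : M -> L -> Prop := Fix wfM (fun _ => L -> Prop) Fn.
Definition Bs xi := fun x => x = l0 \/ exists eta (h : ltM eta xi), Cseq eta x.

Lemma Cseq_eq xi : Cseq xi = K (Bs xi).
Proof.
  unfold Cseq at 1. rewrite Fix_eq. reflexivity.
  intros x g h Hgh. assert (g = h) as ->; auto.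
  apply functional_extensionality_dep; intro y. apply functional_extensionality_dep; intro p. auto.
Qed.

Lemma Cseq_size xi : inj {x | Cseq xi x} M.
Proof.
  induction xi as [xi IH] using (well_founded_ind wfM).
  rewrite Cseq_eq. apply K_size.
  apply inj_union with (ltM := ltM) (T := option {eta | ltM eta xi})
    (Q := fun o x => match o with None => x = l0 | Some e => Cseq (proj1_sig e) x end).
  - exact HM.
  - intros x [h|(eta&h&hx)]. exists None; exact h. exists (Some (exist _ eta h)); exact hx.
  - apply inj_option with ltM; [exact HM|]. exists (@proj1_sig _ _).
    intros [x hx] [y hy] E; simpl in E; subst; f_equal; apply proof_irrelevance.
  - intros [[eta h]|]; simpl. apply IH; auto.
    destruct (M_two HM) as (m0&_). exists (fun _ => m0). intros [x hx] [y hy] _. subst. reflexivity.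
Qed.

Definition CC x := exists xi, Cseq xi x.

Lemma CC_size : inj {x | CC x} M.
Proof.
  apply inj_union with (ltM := ltM) (T := M) (Q := Cseq); auto. apply inj_refl. apply Cseq_size.
Qed.

Lemma l0_Cseq xi : Cseq xi l0.
Proof. rewrite Cseq_eq. left. left. auto. Qed.

Lemma Cseq_mono eta xi x : ltM eta xi -> Cseq eta x -> Cseq xi x.
Proof. intros h hx. rewrite Cseq_eq. left. right. exists eta, h. auto. Qed.

Lemma code_exists (C : L -> Prop) c0 (S : L -> Prop) : C c0 -> small M {x | S x} -> (forall x, S x -> C x) ->
  exists k : Code C, forall x, S x -> exists y, cg k y = x.
Proof.
  intros hc0 HS HSC.
  destruct (M_two HM) as (m0&_).
  destruct (compare_M M {x | S x} ltM (proj1 HM) (ex_intro _ m0 Logic.I)) as [h|[a [g Hg]]].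
  { exfalso; apply (proj2 HS); auto. }
  set (G := fun (y : seg ltM a) => match dec (exists s, g s = y) with
             | left H => exist C (proj1_sig (choose _ H)) (HSC _ (proj2_sig (choose _ H)))
             | right _ => exist C c0 hc0 end).
  exists (existT _ a G). intros x hx. exists (g (exist _ x hx)).
  unfold cg; simpl. unfold G. destruct (dec _) as [H|H].
  - simpl. pose proof (choose_spec _ H) as E. apply Hg in E. rewrite E. reflexivity.
  - exfalso; apply H; eauto.
Qed.

Lemma tr_eq (C : L -> Prop) (k : Code C) (i j : I) : Tr i k = Tr j k -> forall y z,
  (W i (cg k y) <-> W j (cg k y)) /\
  (W i (cg k y) -> W i (cg k z) -> vv i (cg k y) (cg k z) = vv j (cg k y) (cg k z)).
Proof.
  intros E y z.
  pose proof (equal_f (equal_f E y) y) as E1.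
  pose proof (equal_f (equal_f E y) z) as E2.
  unfold Tr in E1, E2.
  split.
  - destruct (dec (W i (cg k y))), (dec (W j (cg k y))); try tauto;
    destruct (dec (W i (cg k y))), (dec (W j (cg k y))); try discriminate; tauto.
  - intros h1 h2.
    destruct (dec (W i (cg k y))); [|tauto]. destruct (dec (W i (cg k z))); [|tauto].
    destruct (dec (W j (cg k y))); [|discriminate]. destruct (dec (W j (cg k z))); [|discriminate].
    injection E2; auto.
Qed.

Lemma same_compat i j : (forall x, W j x -> W i x) ->
  (forall x y, W j x -> W j y -> ltL x y -> vv i x y = vv j x y) -> compatible ltL M (f i) (f j).
Proof.
  intros h1 h2. exists (f i). split; [apply Hf|]. split.
  - split; auto.
  - split; auto.
Qed.

Lemma small_tiny' X : small M X -> tiny M X.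
Proof. apply small_tiny with ltM; exact HM. Qed.

Lemma amal_compat i j :
  (forall x y, W i x -> W j x -> W i y -> W j y -> ltL x y -> vv i x y = vv j x y) ->
  compatible ltL M (f i) (f j).
Proof.
  intros Hag.
  set (A := fun x => W i x /\ ~ W j x).
  set (B := fun x => W j x /\ ~ W i x).
  set (D := fun x => W i x /\ W j x).
  set (V := fun x y => if dec (W i x /\ W i y) then vv i x y else vv j x y).
  assert (HV1 : is_valuation ltL (fun x => A x \/ D x) V).
  { apply val_mono with (w := W i) (f := vv i); auto.
    - exact (proj1 (Hf i)).
    - unfold A, D; intros x [[? ?]|[? ?]]; auto.
    - unfold A, D, V; intros x y hx hy _. destruct (dec _); auto. exfalso; apply n.
      split; [destruct hx as [[? ?]|[? ?]]|destruct hy as [[? ?]|[? ?]]]; auto. }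
  assert (HV2 : is_valuation ltL (fun x => B x \/ D x) V).
  { apply val_mono with (w := W j) (f := vv j); auto.
    - exact (proj1 (Hf j)).
    - unfold B, D; intros x [[? ?]|[? ?]]; auto.
    - unfold B, D, V; intros x y hx hy hxy. destruct (dec _) as [[h1 h2]|]; auto.
      apply Hag; auto; [destruct hx as [[? ?]|[? ?]]|destruct hy as [[? ?]|[? ?]]]; auto. }
  assert (HAB : forall x, A x -> B x -> False) by (unfold A, B; tauto).
  assert (HAD : forall x, A x -> D x -> False) by (unfold A, D; tauto).
  assert (HBD : forall x, B x -> D x -> False) by (unfold B, D; tauto).
  pose proof (rr_valid L ltL Htr Htri V D A B HAB HAD HBD HV1 HV2) as Hr.
  exists (fun x => W i x \/ W j x, rr L ltL V D A B).
  split; [split; [|split]|split].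
  - simpl. apply val_mono with (w := fun x => A x \/ D x \/ B x) (f := rr L ltL V D A B); auto.
    unfold A, B, D; intros x; tauto.
  - assert (Ht : tiny M {x | W i x \/ W j x}).
    { apply tiny_inj with (ltM := ltM) (Y := ({x | W i x} + {x | W j x})%type); [exact HM | |].
      - exists (fun x : {x | W i x \/ W j x} => match dec (W i (proj1_sig x)) with
               | left h => inl (exist _ (proj1_sig x) h)
               | right h => inr (exist _ (proj1_sig x)
                   (match proj2_sig x with or_introl h' => False_ind _ (h h') | or_intror h' => h' end)) end).
        intros [x hx] [y hy] E; simpl in E.
        destruct (dec (W i x)), (dec (W i y)); try discriminate; injection E; intros; subst;
          f_equal; apply proof_irrelevance.
      - apply tiny_sum with ltM; [exact HM | apply small_tiny'; apply W_small | apply small_tiny'; apply W_small]. }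
    exact (proj1 (proj1 (tiny_iff _ HM) Ht)).
  - assert (Ht : tiny M {x | W i x \/ W j x}).
    { apply tiny_inj with (ltM := ltM) (Y := ({x | W i x} + {x | W j x})%type); [exact HM | |].
      - exists (fun x : {x | W i x \/ W j x} => match dec (W i (proj1_sig x)) with
               | left h => inl (exist _ (proj1_sig x) h)
               | right h => inr (exist _ (proj1_sig x)
                   (match proj2_sig x with or_introl h' => False_ind _ (h h') | or_intror h' => h' end)) end).
        intros [x hx] [y hy] E; simpl in E.
        destruct (dec (W i x)), (dec (W i y)); try discriminate; injection E; intros; subst;
          f_equal; apply proof_irrelevance.
      - apply tiny_sum with ltM; [exact HM | apply small_tiny'; apply W_small | apply small_tiny'; apply W_small]. }
    exact (proj2 (proj1 (tiny_iff _ HM) Ht)).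
  - split; simpl.
    + intros x hx; left; exact hx.
    + intros x y hx hy hxy. rewrite rr_nonmixed.
      * unfold V. destruct (dec _); [reflexivity | tauto].
      * unfold mixed, A, B; tauto.
  - split; simpl.
    + intros x hx; right; exact hx.
    + intros x y hx hy hxy. rewrite rr_nonmixed.
      * unfold V. destruct (dec _) as [[h1 h2]|]; auto.
      * unfold mixed, A, B; tauto.
Qed.

Lemma inj_fiber (C : L -> Prop) : forall k : Code C, inj (seg ltM (projT1 k) -> seg ltM (projT1 k) -> T5) M.
Proof.
  intros k.
  eapply inj_trans; [apply inj_fun, inj_fun, (inj_T5 HM)|].
  eapply inj_trans; [apply inj_fun, (tiny_seg M ltM _ (proj2 (proj2 (proj2 HM))))|].
  apply (tiny_seg M ltM _ (proj2 (proj2 (proj2 HM)))).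
Qed.

Lemma sig_tr_eq (C : L -> Prop) (i j : I) (k1 k2 : Code C) :
  existT (fun k : Code C => seg ltM (projT1 k) -> seg ltM (projT1 k) -> T5) k1 (Tr i k1) =
  existT (fun k : Code C => seg ltM (projT1 k) -> seg ltM (projT1 k) -> T5) k2 (Tr j k2) ->
  k1 = k2 /\ Tr i k1 = Tr j k1.
Proof.
  intros E. assert (k1 = k2) by exact (f_equal (@projT1 _ _) E). subst k2.
  apply inj_pair2 in E. auto.
Qed.

Lemma main_inj : inj I M.
Proof.
  apply NNPP; intro HnI.
  destruct (M_two HM) as (m0&m1&H01).
  assert (HCl0 : CC l0) by (exists m0; apply l0_Cseq).
  assert (Hb : exists b, ~ (forall x, W b x -> CC x)).
  { apply NNPP; intro Hall. apply HnI.
    assert (Hall' : forall b x, W b x -> CC x).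
    { intros b x hx. apply NNPP; intro hn. apply Hall. exists b. intro H; apply hn; auto. }
    assert (Hk : forall i, exists k : Code CC, forall x, W i x -> exists y, cg k y = x).
    { intros i. apply code_exists with l0; auto. apply W_small. apply Hall'. }
    set (kk := fun i => choose _ (Hk i)).
    eapply inj_trans; [| apply (@inj_sigma M (Code CC) (fun k : Code CC => seg ltM (projT1 k) -> seg ltM (projT1 k) -> T5) ltM HM (inj_Code CC CC_size) (@inj_fiber CC))].
    exists (fun i => existT (fun k : Code CC => seg ltM (projT1 k) -> seg ltM (projT1 k) -> T5) (kk i) (Tr i (kk i))).
    intros i j E. apply sig_tr_eq in E as [Ek Et].
    apply NNPP; intro hne. apply (Hanti hne).
    pose proof (tr_eq Et) as HT.
    pose proof (choose_spec _ (Hk i)) as Hi. pose proof (choose_spec _ (Hk j)) as Hj.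
    fold (kk i) in Hi. fold (kk j) in Hj. rewrite <- Ek in Hj.
    apply same_compat.
    - intros x hx. destruct (Hj x hx) as [y <-]. apply (proj1 (HT y y)). auto.
    - intros x y hx hy _. destruct (Hj x hx) as [y1 <-]. destruct (Hj y hy) as [z1 <-].
      apply (proj2 (HT y1 z1)); apply (proj1 (HT _ y1)); auto. }
  destruct Hb as [b Hb].
  set (S := fun x => W b x /\ CC x).
  assert (HS : small M {x | S x}).
  { split.
    - apply inj_sub with (Q := W b). unfold S; tauto. apply (proj1 (W_small b)).
    - intro H. apply (proj2 (W_small b)). eapply inj_trans; [exact H|].
      exists (fun x : {x | S x} => exist (W b) (proj1_sig x) (proj1 (proj2_sig x))).
      intros [x hx] [y hy] E. injection E; intros; subst; f_equal; apply proof_irrelevance. }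
  set (xi_of := fun s : {x | S x} => choose _ (proj2 (proj2_sig s))).
  set (Y := fun xi => exists s, xi_of s = xi).
  assert (HY : small M {xi | Y xi}).
  { apply (proj1 (tiny_iff _ HM)). apply tiny_inj with (ltM := ltM) (Y := {x | S x}); [exact HM| |].
    - exists (fun y : {xi | Y xi} => choose _ (proj2_sig y)).
      intros [x hx] [y hy] E. simpl in E.
      pose proof (choose_spec _ hx) as E1. pose proof (choose_spec _ hy) as E2.
      simpl in E1, E2. assert (x = y).
      { transitivity (xi_of (choose _ hx)); [symmetry; exact E1|]. rewrite E. exact E2. }
      subst.
      f_equal; apply proof_irrelevance.
    - apply small_tiny'. exact HS. }
  destruct (regular_M Y HM HY) as [bnd Hbnd].
  assert (HSB : forall x, S x -> Bs bnd x).
  { intros x hx. right. exists (xi_of (exist _ x hx)).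
    assert (h : ltM (xi_of (exist _ x hx)) bnd) by (apply Hbnd; exists (exist _ x hx); auto).
    exists h. exact (choose_spec _ (proj2 hx)). }
  assert (Hl0 : Bs bnd l0) by (left; auto).
  destruct (code_exists (Bs bnd) l0 S Hl0 HS HSB) as [k Hk].
  set (t := exist (fun t => exists i, Tr i k = t) (Tr b k) (ex_intro _ b eq_refl) : Real k).
  set (a := wit t).
  assert (Ha : Tr a k = Tr b k) by exact (wit_spec t).
  assert (HaC : forall x, W a x -> Cseq bnd x).
  { intros x hx. rewrite Cseq_eq. right. exists k, t. exact hx. }
  assert (hne : a <> b).
  { intro E. apply Hb. intros x hx. exists bnd. apply HaC. rewrite E; auto. }
  apply (Hanti hne). apply amal_compat.
  pose proof (tr_eq Ha) as HT.
  intros x y hxa hxb hya hyb _.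
  assert (Sx : S x) by (split; auto; exists bnd; auto).
  assert (Sy : S y) by (split; auto; exists bnd; auto).
  destruct (Hk x Sx) as [y1 <-]. destruct (Hk y Sy) as [z1 <-].
  apply (proj2 (HT y1 z1)); auto.
Qed.

End Main.

Theorem proposition4p5 (L : Type) (ltL : L -> L -> Prop)
  (M : Type) (ltM : M -> M -> Prop) :
  strict_wellorder ltL -> is_cardinal ltL -> infinite L -> regular ltL ->
  strict_wellorder ltM -> is_cardinal ltM -> infinite M ->
  inj M L -> ~ inj L M ->
  pow_lt_eq ltM ->
  mu_plus_cc ltL M.
Proof.
  intros HwL HcL HinfL HregL HwM HcM HinfM HML HnLM Hpow.
  intros I f Hf Hanti.
  assert (HM : Mhyp ltM) by exact (conj HwM (conj HcM (conj HinfM Hpow))).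
  destruct HwL as (_&HtrL&HtriL&_).
  destruct HML as [g _]. destruct HinfM as [e _].
  eapply (@main_inj L ltL M ltM HM (proj2 (proj2 (proj2 HwM))) HtrL HtriL I f Hf Hanti (g (e 0))).
Qed.
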